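(* Let $\Delta$ be a finite tree, $\mathbb{G}=\mathbb{G}(\Delta)$, $K\le\mathbb{G}$ a finite index subgroup and $w$ a vertex of $\widetilde{\Delta}^e$. Let $\pi:C_{\mathbb{G}}(w)\to F_{K,w}=C_{\mathbb{G}}(w)/\langle w\rangle$ be the quotient map. Then $\ker(\pi|_{C_K(w)})=Z(C_K(w))$, so $\pi$ induces an embedding $C_K(w)/Z(C_K(w))\hookrightarrow F_{K,w}$, and its image $P_{K,w}=\pi(C_K(w))$ is a finite index subgroup of $F_{K,w}$.
   Context: $\mathbb{G}(\Delta)$ is the right-angled Artin group with generators the vertices of $\Delta$ and relations $[u,v]=1$ for each edge. Conjugation: $g^h=hgh^{-1}$. The reduced extension graph $\widetilde{\Delta}^e$ has as vertices the elements of $\mathbb{G}$ conjugate to canonical generators corresponding to vertices of $\Delta$ of degree greater than 1, two vertices adjacent iff they commute. If $w=u^g$ with $u$ a vertex of degree $t\ge 2$ with neighbours $u_1,\dots,u_t$, then $C_{\mathbb{G}}(w)=\langle w\rangle\times F(u_1^g,\dots,u_t^g)$, with center $\langle w\rangle$, so $F_{K,w}=C_{\mathbb{G}}(w)/\langle w\rangle$ is free of rank $t$. $C_K(w)=K\cap C_{\mathbb{G}}(w)$ and $Z(\cdot)$ denotes the center. *)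

(* Defs.v *)
(* The right-angled Artin group G(Delta) is
   encoded by its standard presentation: elements are words in the letters
   v^{+1}, v^{-1} (v a vertex), and group equality is the congruence
   generated by free cancellation and the commutation relations of edges. *)
From mathcomp Require Import all_boot.
From mathcomp Require Import ssralg ssrint.
Set Implicit Arguments. Unset Strict Implicit. Unset Printing Implicit Defensive.

Definition simple_graph (V : finType) (e : rel V) : Prop :=
  symmetric e /\ irreflexive e.

(* A finite tree: nonempty, connected, and with exactly #|V| - 1 (undirected)
   edges, i.e. 2(#|V| - 1) ordered adjacent pairs. *)
Definition finite_tree (V : finType) (e : rel V) : Prop :=
  [/\ simple_graph e, 0 < #|V|,
      (forall x y : V, connect e x y) &
      #|[set p : V * V | e p.1 p.2]| = (#|V| - 1).*2].

Definition degree (V : finType) (e : rel V) (u : V) : nat := #|[set v | e u v]|.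

(* a letter (v, false) stands for v, (v, true) for v^{-1} *)
Definition word (V : Type) := seq (V * bool).

Definition inv_letter (V : Type) (x : V * bool) : V * bool := (x.1, ~~ x.2).

Definition winv (V : Type) (w : word V) : word V := rev (map (@inv_letter V) w).

Inductive raag_eq (V : finType) (e : rel V) : word V -> word V -> Prop :=
| raag_refl  : forall x, raag_eq e x x
| raag_sym   : forall x y, raag_eq e x y -> raag_eq e y x
| raag_trans : forall x y z, raag_eq e x y -> raag_eq e y z -> raag_eq e x z
| raag_cancel : forall (a b : word V) (l : V * bool),
    raag_eq e (a ++ l :: inv_letter l :: b) (a ++ b)
| raag_comm : forall (a b : word V) (u v : V) (su sv : bool), e u v ->
    raag_eq e (a ++ (u, su) :: (v, sv) :: b) (a ++ (v, sv) :: (u, su) :: b).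

Definition wpow (V : Type) (w : word V) (m : int) : word V :=
  match m with
  | Posz n => flatten (nseq n w)
  | Negz n => flatten (nseq n.+1 (winv w))
  end.

Definition is_subgroup (V : finType) (e : rel V) (K : word V -> Prop) : Prop :=
  [/\ (forall x y, raag_eq e x y -> K x -> K y),
      K [::],
      (forall x y, K x -> K y -> K (x ++ y)) &
      (forall x, K x -> K (winv x))].

Definition finite_index (V : finType) (e : rel V) (K : word V -> Prop) : Prop :=
  exists reps : seq (word V), forall x : word V,
    exists2 g, g \in reps & K (winv g ++ x).

(* w is a vertex of the reduced extension graph: a conjugate g u g^{-1}
   of a canonical generator u with degree u > 1 *)
Definition reduced_ext_vertex (V : finType) (e : rel V) (w : word V) : Prop :=
  exists (u : V) (g : word V),
    1 < degree e u /\ raag_eq e w (g ++ (u, false) :: winv g).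

Definition centG (V : finType) (e : rel V) (w x : word V) : Prop :=
  raag_eq e (x ++ w) (w ++ x).

Definition centK (V : finType) (e : rel V) (K : word V -> Prop) (w x : word V)
  : Prop := K x /\ centG e w x.

Definition center_centK (V : finType) (e : rel V) (K : word V -> Prop)
  (w x : word V) : Prop :=
  centK e K w x /\ forall y, centK e K w y -> raag_eq e (x ++ y) (y ++ x).

(* kernel of pi restricted to C_K(w), pi : C_G(w) -> C_G(w)/<w> *)
Definition ker_pi_CK (V : finType) (e : rel V) (K : word V -> Prop)
  (w x : word V) : Prop :=
  centK e K w x /\ exists m : int, raag_eq e x (wpow w m).

(* P_{K,w} = pi(C_K(w)) has finite index in F_{K,w} = C_G(w)/<w>:
   finitely many c_i in C_G(w) with C_G(w) = U_i c_i C_K(w) <w>. *)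
Definition image_finite_index (V : finType) (e : rel V) (K : word V -> Prop)
  (w : word V) : Prop :=
  exists reps : seq (word V),
    (forall c, c \in reps -> centG e w c) /\
    forall x, centG e w x ->
      exists2 c, c \in reps &
        exists (k : word V) (m : int),
          centK e K w k /\ raag_eq e x (c ++ k ++ wpow w m).

(* Main.v *)
Require Import Defs.
From mathcomp Require Import all_boot.
From mathcomp Require Import ssralg ssrint.
From Stdlib Require Import ClassicalEpsilon Classical.
Set Implicit Arguments. Unset Strict Implicit. Unset Printing Implicit Defensive.


Section Grp.
Variables (V : finType) (e : rel V).
Local Notation req := (raag_eq e).
Local Notation inv := (@inv_letter V).

Lemma inv_letterK : involutive inv.
Proof. by case=> a b; rewrite /inv_letter /= negbK. Qed.

Lemma winv_cat (x y : word V) : winv (x ++ y) = winv y ++ winv x.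
Proof. by rewrite /winv map_cat rev_cat. Qed.

Lemma winv_cons l (x : word V) : winv (l :: x) = winv x ++ [:: inv l].
Proof. by rewrite /winv /= rev_cons cats1. Qed.

Lemma winvK : involutive (@winv V).
Proof. by move=> x; rewrite /winv map_rev revK -map_comp (eq_map inv_letterK) map_id. Qed.

Lemma req_trans' y x z : req x y -> req y z -> req x z.
Proof. exact: raag_trans. Qed.

Lemma req_catl a x y : req x y -> req (a ++ x) (a ++ y).
Proof.
elim=> {x y}.
- by move=> x; apply: raag_refl.
- by move=> x y _ H; apply: raag_sym.
- by move=> x y z _ H1 _ H2; apply: raag_trans H2.
- by move=> a0 b l; rewrite catA (catA a a0 b); apply: raag_cancel.
- by move=> a0 b u v su sv H; rewrite !catA; apply: raag_comm.
Qed.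

Lemma req_catr b x y : req x y -> req (x ++ b) (y ++ b).
Proof.
elim=> {x y}.
- by move=> x; apply: raag_refl.
- by move=> x y _ H; apply: raag_sym.
- by move=> x y z _ H1 _ H2; apply: raag_trans H2.
- by move=> a0 b0 l; rewrite -!catA /=; apply: raag_cancel.
- by move=> a0 b0 u v su sv H; rewrite -!catA /=; apply: raag_comm.
Qed.

Lemma req_cat x x' y y' : req x x' -> req y y' -> req (x ++ y) (x' ++ y').
Proof. by move=> H1 H2; apply: raag_trans (req_catr _ H1) (req_catl _ H2). Qed.

Lemma req_invr x : req (x ++ winv x) [::].
Proof.
elim: x => [|l x IH] /=; first exact: raag_refl.
rewrite winv_cons.
have H : req ([:: l] ++ (x ++ winv x) ++ [:: inv l]) ([:: l] ++ [::] ++ [:: inv l]).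
  by apply: req_catl; apply: req_catr.
rewrite /= -catA in H; apply: raag_trans H _.
by have := raag_cancel e [::] [::] l.
Qed.

Lemma req_invl x : req (winv x ++ x) [::].
Proof. by have := req_invr (winv x); rewrite winvK. Qed.

Lemma req_winv x y : req x y -> req (winv x) (winv y).
Proof.
elim=> {x y}.
- by move=> x; apply: raag_refl.
- by move=> x y _ H; apply: raag_sym.
- by move=> x y z _ H1 _ H2; apply: raag_trans H2.
- move=> a b l; rewrite !winv_cat !winv_cons -!catA /= inv_letterK.
  exact: raag_cancel.
- move=> a b u v su sv H; rewrite !winv_cat !winv_cons -!catA /=.
  by apply: raag_sym; apply: raag_comm.
Qed.

Lemma req_cancl a x y : req (a ++ x) (a ++ y) -> req x y.
Proof.
move=> H.
have E z : req (winv a ++ a ++ z) z by rewrite catA; apply: (req_catr z (req_invl a)).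
exact: raag_trans (raag_sym (E x)) (raag_trans (req_catl (winv a) H) (E y)).
Qed.

Definition comm (x y : word V) := req (x ++ y) (y ++ x).

Lemma comm_sym x y : comm x y -> comm y x.
Proof. by move=> H; apply: raag_sym. Qed.

Lemma comm_reql x x' y : req x x' -> comm x y -> comm x' y.
Proof.
move=> Hx H; rewrite /comm.
apply: raag_trans (req_catr _ (raag_sym Hx)) _.
apply: raag_trans H _; exact: req_catl.
Qed.

Lemma comm_reqr x y y' : req y y' -> comm x y -> comm x y'.
Proof. by move=> Hy H; apply: comm_sym; apply: comm_reql Hy (comm_sym H). Qed.

Lemma comm_nil x : comm x [::].
Proof. by rewrite /comm cats0; exact: raag_refl. Qed.

Lemma comm_cat x y z : comm x y -> comm x z -> comm x (y ++ z).
Proof.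
move=> H1 H2; rewrite /comm.
apply: raag_trans (_ : req (y ++ x ++ z) _).
  by rewrite catA (catA y); apply: req_catr.
by rewrite -catA; apply: req_catl.
Qed.

Lemma req_cancel_l y z : req (winv y ++ y ++ z) z.
Proof. by rewrite catA; apply: (req_catr z (req_invl y)). Qed.

Lemma req_cancel_r y z : req (z ++ y ++ winv y) z.
Proof. by rewrite -[X in req _ X]cats0; apply: req_catl; apply: req_invr. Qed.

Lemma comm_winv x y : comm x y -> comm x (winv y).
Proof.
move=> H; rewrite /comm.
apply: raag_trans (raag_sym (req_cancel_l y _)) _.
have := req_catl (winv y) (req_catr (winv y) (raag_sym H)); rewrite -!catA => H'.
apply: raag_trans H' _.
by rewrite catA; apply: req_cancel_r.
Qed.

Lemma comm_flatten x y n : comm x y -> comm x (flatten (nseq n y)).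
Proof. by move=> H; elim: n => [|n IH] /=; [exact: comm_nil | apply: comm_cat]. Qed.

Lemma comm_wpow x y m : comm x y -> comm x (wpow y m).
Proof.
move=> H; case: m => n; rewrite /wpow.
  exact: comm_flatten.
by apply: comm_flatten; apply: comm_winv.
Qed.

Lemma req_conj g a b : req a b -> req (g ++ a ++ winv g) (g ++ b ++ winv g).
Proof. by move=> H; apply: req_catl; apply: req_catr. Qed.

Lemma comm_conj g x y : comm x y -> comm (g ++ x ++ winv g) (g ++ y ++ winv g).
Proof.
move=> H; rewrite /comm.
apply: raag_trans (_ : req (g ++ (x ++ y) ++ winv g) _).
  rewrite -!catA; apply: req_catl; rewrite !catA; apply: req_catr.
  rewrite -!catA; apply: req_catl; rewrite catA.
  apply: raag_trans (req_catr _ (req_invl g)) _; exact: raag_refl.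
apply: raag_trans (req_conj g H) _.
rewrite -!catA; apply: req_catl; rewrite !catA; apply: req_catr.
rewrite -!catA; apply: req_catl; apply: raag_sym; rewrite catA.
apply: raag_trans (req_catr _ (req_invl g)) _; exact: raag_refl.
Qed.

Lemma conj_inv g x : req (winv g ++ (g ++ x ++ winv g) ++ g) x.
Proof.
rewrite -!catA; apply: raag_trans (req_cancel_l g _) _.
by rewrite -[X in req _ X]cats0; apply: req_catl; apply: req_invl.
Qed.

Lemma comm_unconj g x y : comm x (g ++ y ++ winv g) -> comm (winv g ++ x ++ g) y.
Proof.
move=> H; have := comm_conj (winv g) H; rewrite winvK => H2.
by apply: comm_reqr (conj_inv g y) H2.
Qed.

Lemma conj_pow g a n :
  req (flatten (nseq n (g ++ a ++ winv g))) (g ++ flatten (nseq n a) ++ winv g).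
Proof.
elim: n => [|n IH] /=; first by apply: raag_sym; apply: req_invr.
apply: raag_trans (req_catl _ IH) _.
rewrite -!catA; apply: req_catl; apply: req_catl.
exact: req_cancel_l.
Qed.

Lemma flatten_req a b n : req a b -> req (flatten (nseq n a)) (flatten (nseq n b)).
Proof. by move=> H; elim: n => [|n IH] /=; [exact: raag_refl | apply: req_cat]. Qed.

Lemma wpow_req a b m : req a b -> req (wpow a m) (wpow b m).
Proof.
move=> H; case: m => n; rewrite /wpow.
  exact: flatten_req.
by apply: flatten_req; apply: req_winv.
Qed.

Lemma wpow_conj g a m : req (wpow (g ++ a ++ winv g) m) (g ++ wpow a m ++ winv g).
Proof.
case: m => n; rewrite /wpow; first exact: conj_pow.
by rewrite !winv_cat winvK -catA; apply: conj_pow.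
Qed.

End Grp.


Section Tr.
Variables (V : finType) (e : rel V).
Hypothesis esym : symmetric e.
Hypothesis eirr : irreflexive e.
Local Notation req := (raag_eq e).
Local Notation inv := (@inv_letter V).

Definition inpair (a b : V) (l : V * bool) := (l.1 == a) || (l.1 == b).
Definition proj a b (s : word V) := filter (inpair a b) s.
Definition tr (s t : word V) := forall a b, ~~ e a b -> proj a b s = proj a b t.

Lemma tr_refl s : tr s s. Proof. by []. Qed.
Lemma tr_sym s t : tr s t -> tr t s. Proof. by move=> H a b h; rewrite H. Qed.
Lemma tr_trans t s u : tr s t -> tr t u -> tr s u.
Proof. by move=> H1 H2 a b h; rewrite H1 ?H2. Qed.

Lemma tr_cat s s' t t' : tr s s' -> tr t t' -> tr (s ++ t) (s' ++ t').
Proof. by move=> H1 H2 a b h; rewrite /proj !filter_cat -/(proj a b _) H1 // -/(proj a b _) H2. Qed.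

Lemma tr_cons l s t : tr s t -> tr (l :: s) (l :: t).
Proof. exact: (@tr_cat [:: l] [:: l]). Qed.

Lemma tr_consK l s t : tr (l :: s) (l :: t) -> tr s t.
Proof. by move=> H a b h; have := H a b h; rewrite /proj /=; case: ifP => // _ [->]. Qed.

Lemma tr_catlK a s t : tr (a ++ s) (a ++ t) -> tr s t.
Proof. by elim: a => [|l a IH] //= H; apply: IH; apply: tr_consK H. Qed.

Lemma inv_inpair a b l : inpair a b (inv l) = inpair a b l.
Proof. by case: l. Qed.

Lemma proj_winv a b s : proj a b (winv s) = winv (proj a b s).
Proof.
rewrite /proj /winv filter_rev filter_map; congr (rev (map _ _)).
Qed.

Lemma tr_winv s t : tr s t -> tr (winv s) (winv t).
Proof. by move=> H a b h; rewrite !proj_winv H. Qed.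

Lemma e_neq a b : e a b -> a != b.
Proof. by move=> H; apply/eqP => E; move: H; rewrite E eirr. Qed.

Lemma tr_swap l m s : e l.1 m.1 -> tr (l :: m :: s) (m :: l :: s).
Proof.
move=> H a b h; rewrite /proj /=.
case El: (inpair a b l); case Em: (inpair a b m) => //.
exfalso; move: El Em; rewrite /inpair.
case/orP => /eqP E1; case/orP => /eqP E2; move: H h; rewrite E1 E2 ?eirr //.
- by move=> ->.
- by rewrite esym => ->.
Qed.

Lemma size_count (s : word V) : size s = \sum_(a : V) count (fun l => l.1 == a) s.
Proof.
elim: s => [|l s IH] /=; first by rewrite big1.
rewrite big_split /= -IH (bigD1 l.1) //= eqxx big1 ?addn0 // => b /negbTE.
by rewrite eq_sym => ->.
Qed.

Lemma tr_size s t : tr s t -> size s = size t.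
Proof.
move=> H; rewrite !size_count; apply: eq_bigr => a _.
have := congr1 size (H a a (negbT (eirr a))); rewrite /proj !size_filter.
by rewrite /inpair !(eq_count (fun l => orbb _)).
Qed.

Lemma tr_nil t : tr [::] t -> t = [::].
Proof. by move/tr_size => /= H; apply/size0nil; rewrite -H. Qed.

Lemma tr_move l y1 y2 : all (fun m => e l.1 m.1) y1 -> tr (y1 ++ l :: y2) (l :: y1 ++ y2).
Proof.
elim: y1 => [|m y1 IH] //= /andP [Hm Hall].
apply: tr_trans (tr_cons m (IH Hall)) _.
by apply: tr_swap; rewrite esym.
Qed.

Lemma req_move l y1 y2 : all (fun m => e l.1 m.1) y1 -> req (y1 ++ l :: y2) (l :: y1 ++ y2).
Proof.
case: l => u su.
elim: y1 => [|m y1 IH] /=; first by move=> _; apply: raag_refl.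
case/andP => Hm Hall.
apply: raag_trans (req_catl [:: m] (IH Hall)) _.
move: Hm; case: m => v sv /= Hm.
have Hm' : e v u by rewrite esym.
exact: (raag_comm [::] (y1 ++ y2) sv su Hm').
Qed.


Lemma proj_nil a b s : ~~ has (inpair a b) s -> proj a b s = [::].
Proof. by move=> H; apply/eqP; move: H; rewrite has_filter negbK. Qed.

Lemma extract l x y : tr (l :: x) y ->
  exists y1 y2, [/\ y = y1 ++ l :: y2, all (fun m => e l.1 m.1) y1 & tr x (y1 ++ y2)].
Proof.
move=> H.
have Hll := H l.1 l.1 (negbT (eirr _)).
have Hp : inpair l.1 l.1 =1 (fun m : V * bool => m.1 == l.1).
  by move=> m; rewrite /inpair /= orbb.
have Hhas : has (fun m : V * bool => m.1 == l.1) y.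
  apply/negPn/negP => Hn; move: Hll; rewrite [proj _ _ y]proj_nil; last by rewrite (eq_has Hp).
  by rewrite /proj /= /inpair eqxx.
case: (split_find Hhas) H Hll => m y1 y2 /eqP Hm Hn H Hll.
have E1 : proj l.1 l.1 (l :: x) = l :: proj l.1 l.1 x by rewrite /proj /= /inpair eqxx.
have E2 : proj l.1 l.1 (y1 ++ m :: y2) = m :: proj l.1 l.1 y2.
  by rewrite /proj filter_cat -/(proj _ _ y1) proj_nil ?(eq_has Hp) //= /inpair Hm eqxx.
rewrite cat_rcons E1 E2 in Hll; case: Hll => Eml _; subst m.
rewrite cat_rcons; rewrite cat_rcons in H.
have Hall : all (fun m => e l.1 m.1) y1.
  apply/allP => m my1; apply/negPn/negP => hlm.
  have := H l.1 m.1 hlm; rewrite /proj filter_cat /= {1}/inpair eqxx /=.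
  have : m \in filter (inpair l.1 m.1) y1 by rewrite mem_filter my1 /inpair eqxx orbT.
  case E: (filter _ y1) => [|z f] //= _ [Ez _]; subst z.
  move/negP: Hn; apply; apply/hasP; exists l => //.
  have : l \in filter (inpair l.1 m.1) y1 by rewrite E inE eqxx.
  by rewrite mem_filter => /andP [].
exists y1, y2; split => //.
apply: (@tr_consK l); apply: tr_trans H _.
exact: tr_move.
Qed.

Lemma levi x p q s t : tr x (p :: s) -> tr x (q :: t) -> p != q ->
  [/\ e q.1 p.1 & exists z, tr s (q :: z) /\ tr t (p :: z)].
Proof.
move=> H1 H2 Hpq.
have := extract (tr_trans (tr_sym H2) H1) => [[y1 [y2 [E Hall Ht]]]].
case: y1 E Hall Ht => [|p' y1] /=.
  by case=> E; rewrite E eqxx in Hpq.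
case=> <- -> /andP [Hqp Hall] Ht; split => //.
exists (y1 ++ y2); split => //; exact: tr_move.
Qed.

Lemma tr_req s t : tr s t -> req s t.
Proof.
elim: s t => [|l s IH] t H.
  by rewrite (tr_nil H); apply: raag_refl.
have [y1 [y2 [E Hall Ht]]] := extract H.
rewrite E; apply: raag_trans (req_catl [:: l] (IH _ Ht)) _.
by apply: raag_sym; apply: req_move.
Qed.


Definition red (x : word V) := forall a b l, ~ tr x (a ++ l :: inv l :: b).

Lemma red_tr x y : tr x y -> red x -> red y.
Proof. by move=> H Hx a b l Hy; apply: (Hx a b l); apply: tr_trans Hy. Qed.

Lemma red_catr a x : red (a ++ x) -> red x.
Proof.
move=> H a' b l Hx; apply: (H (a ++ a') b l); rewrite -catA.
exact: tr_cat.
Qed.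

Lemma red_catl a x : red (x ++ a) -> red x.
Proof.
move=> H a' b l Hx; apply: (H a' (b ++ a) l).
by have := tr_cat Hx (tr_refl a); rewrite -catA.
Qed.

Lemma red_nil : red [::].
Proof. by move=> a b l /tr_size; rewrite size_cat /= addnS. Qed.

Lemma red_winv x : red x -> red (winv x).
Proof.
move=> H a b l Hx; apply: (H (winv b) (winv a) l).
have := tr_winv Hx; rewrite winvK => Hx'; apply: tr_trans Hx' _.
by rewrite winv_cat !winv_cons -!catA /= inv_letterK; apply: tr_refl.
Qed.

Lemma push l x : red x -> (forall z, ~ tr x (inv l :: z)) -> red (l :: x).
Proof.
move=> Hx Hz a; elim: a x Hx Hz => [|c a IH] x Hx Hz b k /= H.
  case: (eqVneq l k) => [E|Hlk].
    by subst k; apply: (Hz b); apply: tr_consK H.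
  have [_ [z [H1 H2]]] := levi (tr_refl (l :: x)) H Hlk.
  case: (eqVneq (inv k) l) => [E|Hkl].
    by apply: (Hz z); rewrite -E inv_letterK.
  have [_ [z' [H3 H4]]] := levi (tr_refl (inv k :: b)) H2 Hkl.
  apply: (Hx [::] z' k) => /=; apply: tr_trans H1 _.
  exact: tr_cons H4.
case: (eqVneq l c) => [E|Hlc].
  by subst c; apply: (Hx a b k); apply: tr_consK H.
have [Hcl [z [H1 H2]]] := levi (tr_refl (l :: x)) H Hlc.
have Hzr : red z by apply: (@red_catr [:: c]); apply: red_tr Hx.
apply: (IH z Hzr _ b k (tr_sym H2)) => w Hw.
apply: (Hz (c :: w)); apply: tr_trans H1 _.
apply: tr_trans (tr_cons c Hw) _.
by apply: tr_swap; exact: Hcl.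
Qed.

Lemma push_r l x : red x -> (forall z, ~ tr x (z ++ [:: inv l])) -> red (x ++ [:: l]).
Proof.
move=> Hx Hz; rewrite -[x ++ _]winvK; apply: red_winv.
rewrite winv_cat /= /winv /= -/(winv x).
apply: push; first exact: red_winv.
move=> z Hw; apply: (Hz (winv z)).
have := tr_winv Hw; rewrite winvK => H; apply: tr_trans H _.
by rewrite winv_cons inv_letterK.
Qed.


Definition act (l : V * bool) (x : word V) : word V :=
  match excluded_middle_informative (exists z, tr x (inv l :: z)) with
  | left H => proj1_sig (constructive_indefinite_description _ H)
  | right _ => l :: x
  end.

Lemma actP l x : tr x (inv l :: act l x) \/
  ((forall z, ~ tr x (inv l :: z)) /\ act l x = l :: x).
Proof.
rewrite /act; case: excluded_middle_informative => H.
  by left; exact: (proj2_sig (constructive_indefinite_description _ H)).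
by right; split => // z Hz; apply: H; exists z.
Qed.

Lemma act_tr l x y : tr x y -> tr (act l x) (act l y).
Proof.
move=> H; case: (actP l x) => [Hx|[Hx ->]]; case: (actP l y) => [Hy|[Hy ->]].
- by apply: (@tr_consK (inv l)); apply: tr_trans (tr_sym Hx) (tr_trans H Hy).
- by case: (Hy (act l x)); apply: tr_trans (tr_sym H) Hx.
- by case: (Hx (act l y)); apply: tr_trans H Hy.
- exact: tr_cons.
Qed.

Lemma act_req l x : req (act l x) (l :: x).
Proof.
case: (actP l x) => [Hx|[_ ->]]; last exact: raag_refl.
apply: raag_sym; apply: raag_trans (req_catl [:: l] (tr_req Hx)) _.
exact: (@raag_cancel V e [::] (act l x) l).
Qed.

Lemma act_red l x : red x -> red (act l x).
Proof.
move=> Hx; case: (actP l x) => [H|[H ->]]; last exact: push.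
by apply: (@red_catr [:: inv l]); apply: red_tr Hx.
Qed.

Lemma act_inv l x : red x -> tr (act (inv l) (act l x)) x.
Proof.
move=> Hx; case: (actP l x) => [H|[H ->]].
  case: (actP (inv l) (act l x)) => [H2|[_ ->]]; last exact: tr_sym.
  exfalso; apply: (Hx [::] (act (inv l) (act l x)) (inv l)); rewrite /=.
  exact: tr_trans H (tr_cons _ H2).
case: (actP (inv l) (l :: x)) => [H2|[H2 _]].
  by rewrite inv_letterK in H2; apply: tr_sym; apply: tr_consK H2.
by case: (H2 x); rewrite inv_letterK.
Qed.

Lemma act_comm_mixed l m x : e l.1 m.1 ->
  tr x (inv m :: act m x) -> (forall z, ~ tr x (inv l :: z)) ->
  tr (act l (act m x)) (act m (act l x)).
Proof.
move=> Hlm Hm Hl.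
case: (actP l (act m x)) => [H|[_ ->]].
  exfalso; apply: (Hl (inv m :: act l (act m x))).
  apply: tr_trans Hm _; apply: tr_trans (tr_cons _ H) _.
  by apply: tr_swap; rewrite /= esym.
case: (actP l x) => [H|[_ ->]]; first by case: (Hl _ H).
case: (actP m (l :: x)) => [H|[H _]].
  apply: tr_sym; apply: (@tr_consK (inv m)); apply: tr_trans (tr_sym H) _.
  apply: tr_trans (tr_cons l Hm) _.
  exact: tr_swap.
by case: (H (l :: act m x)); apply: tr_trans (tr_cons l Hm) _; apply: tr_swap.
Qed.

Lemma act_comm l m x : e l.1 m.1 -> tr (act l (act m x)) (act m (act l x)).
Proof.
move=> Hlm.
have Hne : inv m != inv l.
  by apply/eqP => E; have := congr1 fst E; rewrite /= => E1; move: Hlm; rewrite E1 eirr.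
case: (actP m x) => [Hm|[Hm Em]]; case: (actP l x) => [Hl|[Hl El]].
- have [_ [z [H1 H2]]] := levi Hm Hl Hne.
  case: (actP l (act m x)) => [H3|[H3 _]]; last by case: (H3 _ H1).
  case: (actP m (act l x)) => [H4|[H4 _]]; last by case: (H4 _ H2).
  have E3 : tr (act l (act m x)) z.
    by apply: (@tr_consK (inv l)); apply: tr_trans (tr_sym H3) H1.
  have E4 : tr (act m (act l x)) z.
    by apply: (@tr_consK (inv m)); apply: tr_trans (tr_sym H4) H2.
  exact: tr_trans E3 (tr_sym E4).
- exact: act_comm_mixed.
- by apply: tr_sym; apply: act_comm_mixed => //; rewrite esym.
- rewrite Em El.
  case: (actP l (m :: x)) => [H|[_ ->]].
    have Hne2 : m != inv l.
      by apply/eqP => E; have := congr1 fst E; rewrite /= => E1; move: Hlm; rewrite E1 eirr.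
    by have [_ [z [H1 _]]] := levi (tr_refl (m :: x)) H Hne2; case: (Hl _ H1).
  case: (actP m (l :: x)) => [H|[_ ->]].
    have Hne2 : l != inv m.
      by apply/eqP => E; have := congr1 fst E; rewrite /= => E1; move: Hlm; rewrite E1 eirr.
    by have [_ [z [H1 _]]] := levi (tr_refl (l :: x)) H Hne2; case: (Hm _ H1).
  exact: tr_swap.
Qed.

Fixpoint nf (x : word V) : word V := if x is l :: x' then act l (nf x') else [::].

Lemma nf_red x : red (nf x).
Proof. by elim: x => [|l x IH] /=; [exact: red_nil | exact: act_red]. Qed.

Lemma nf_req x : req x (nf x).
Proof.
elim: x => [|l x IH] /=; first exact: raag_refl.
apply: raag_trans (req_catl [:: l] IH) _.
exact: raag_sym (act_req l (nf x)).
Qed.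

Lemma nf_cat a y y' : tr (nf y) (nf y') -> tr (nf (a ++ y)) (nf (a ++ y')).
Proof. by elim: a => [|l a IH] //= H; apply: act_tr; apply: IH. Qed.

Lemma req_nf x y : req x y -> tr (nf x) (nf y).
Proof.
elim=> {x y}.
- move=> x; exact: tr_refl.
- by move=> x y _ H; apply: tr_sym.
- by move=> x y z _ H1 _ H2; apply: tr_trans H2.
- move=> a b l; apply: nf_cat => /=.
  by have := act_inv (inv l) (@nf_red b); rewrite inv_letterK.
- move=> a b u v su sv H; apply: nf_cat => /=.
  exact: act_comm.
Qed.

Lemma nf_id x : red x -> tr (nf x) x.
Proof.
elim: x => [|l x IH] //= Hx.
have Hx' : red x by apply: (@red_catr [:: l]).
apply: tr_trans (act_tr l (IH Hx')) _.
case: (actP l x) => [H|[_ ->]]; last exact: tr_refl.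
by exfalso; apply: (Hx [::] (act l x) l); apply: tr_cons.
Qed.

Lemma red_uniq x y : red x -> red y -> req x y -> tr x y.
Proof.
move=> Hx Hy H; apply: tr_trans (tr_sym (nf_id Hx)) _.
exact: tr_trans (req_nf H) (nf_id Hy).
Qed.

End Tr.


Definition e0 (V : finType) : rel V := fun _ _ => false.

Lemma cons_eq_rcons (T : eqType) (a : T) p : a :: p = p ++ [:: a] -> all (pred1 a) p.
Proof.
elim: p => [|b p IH] //= [Eab E]; subst b; rewrite eqxx /=.
exact: IH.
Qed.

Section Cent.
Variables (V : finType) (e : rel V).
Hypothesis esym : symmetric e.
Hypothesis eirr : irreflexive e.
Local Notation req := (raag_eq e).
Local Notation inv := (@inv_letter V).
Local Notation tr := (tr e).
Local Notation red := (red e).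

Lemma cent_gen u n x : size x <= n -> red x -> comm e [:: (u, false)] x ->
  exists y, req x y /\ all (fun l => (l.1 == u) || e u l.1) y.
Proof.
set U := (u, false).
elim: n x => [|n IH] x Hsz Hx Hc.
  by move: Hsz; rewrite leqn0 => /nilP ->; exists [::]; split => //; exact: raag_refl.
case: (classic (exists x1, tr x (inv U :: x1))) => [[x1 H1]|N1].
  have Hr := tr_req esym eirr H1.
  have Hx1 : red x1 by apply: (@red_catr _ _ [:: inv U]); apply: red_tr Hx.
  have Hs : size x = (size x1).+1 by rewrite (tr_size eirr H1).
  have E1 : req x1 (U :: x).
    apply: raag_sym; apply: raag_trans (req_catl [:: U] Hr) _.
    exact: (@raag_cancel V e [::] x1 U).
  have Hc1 : comm e [:: U] x1.
    apply: comm_reqr (raag_sym E1) _.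
    by rewrite -[U :: x]cat1s; apply: comm_cat => //; rewrite /comm; exact: raag_refl.
  have Hsz1 : size x1 <= n by rewrite -ltnS -Hs.
  have [y1 [Hy1 Ha]] := IH x1 Hsz1 Hx1 Hc1.
  exists (inv U :: y1); split => /=; last by rewrite eqxx.
  by apply: raag_trans Hr _; apply: (req_catl [:: inv U] Hy1).
case: (classic (exists x2, tr x (x2 ++ [:: inv U]))) => [[x2 H2]|N2].
  have Hr := tr_req esym eirr H2.
  have Hx2 : red x2 by apply: (@red_catl _ _ [:: inv U]); apply: red_tr Hx.
  have Hs : size x = (size x2).+1 by rewrite (tr_size eirr H2) size_cat addn1.
  have E2 : req x2 (x ++ [:: U]).
    apply: raag_sym; apply: raag_trans (req_catr [:: U] Hr) _.
    by rewrite -catA /=; have := @raag_cancel V e x2 [::] (inv U); rewrite inv_letterK cats0.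
  have Hc2 : comm e [:: U] x2.
    apply: comm_reqr (raag_sym E2) _.
    by apply: comm_cat => //; rewrite /comm; exact: raag_refl.
  have Hsz2 : size x2 <= n by rewrite -ltnS -Hs.
  have [y2 [Hy2 Ha]] := IH x2 Hsz2 Hx2 Hc2.
  exists (y2 ++ [:: inv U]); split; last by rewrite all_cat Ha /= eqxx.
  by apply: raag_trans Hr _; apply: (req_catr [:: inv U] Hy2).
have HA : red (U :: x) by apply: push => // z Hz; apply: N1; exists z.
have HB : red (x ++ [:: U]) by apply: push_r => // z Hz; apply: N2; exists z.
have HT := red_uniq esym eirr HA HB Hc.
exists x; split; first exact: raag_refl.
apply/allP => m mx; apply/negPn/negP; rewrite negb_or => /andP [Hmu Hem].
have := HT u m.1 Hem; rewrite /proj filter_cat /= /inpair eqxx /= => E.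
have := cons_eq_rcons E => /allP /(_ m).
rewrite mem_filter mx eqxx orbT => /(_ isT) /eqP Em.
by move: Hmu; rewrite Em eqxx.
Qed.

Lemma req_filter (P : pred V) x y : (forall a b, P a -> P b -> ~~ e a b) ->
  req x y -> raag_eq (@e0 V) (filter (fun l => P l.1) x) (filter (fun l => P l.1) y).
Proof.
move=> HP; elim=> {x y}.
- by move=> x; apply: raag_refl.
- by move=> x y _ H; apply: raag_sym.
- by move=> x y z _ H1 _ H2; apply: raag_trans H2.
- move=> a b l; rewrite !filter_cat /=.
  case Hl: (P l.1); last by exact: raag_refl.
  exact: raag_cancel.
- move=> a b u v su sv H; rewrite !filter_cat /=.
  case Hu: (P u); case Hv: (P v) => //; try exact: raag_refl.
  by move: (HP u v Hu Hv); rewrite H.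
Qed.

Lemma req_from0 x y : raag_eq (@e0 V) x y -> req x y.
Proof.
elim=> {x y}.
- by move=> x; apply: raag_refl.
- by move=> x y _ H; apply: raag_sym.
- by move=> x y z _ H1 _ H2; apply: raag_trans H2.
- by move=> a b l; exact: raag_cancel.
- by [].
Qed.

End Cent.

Section FG.
Variable V : finType.
Local Notation e0 := (@e0 V).
Local Notation req0 := (raag_eq e0).
Local Notation inv := (@inv_letter V).

Lemma e0sym : symmetric e0. Proof. by []. Qed.
Lemma e0irr : irreflexive e0. Proof. by []. Qed.

Lemma tr0_eq s t : tr e0 s t -> s = t.
Proof.
elim: s t => [|l s IH] t H; first by rewrite (tr_nil e0irr H).
have [y1 [y2 [E Hall Ht]]] := extract e0sym e0irr H.
case: y1 E Hall Ht => [|m y1] //= -> _ Ht.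
by rewrite (IH _ Ht).
Qed.

Lemma push0 l x : red e0 x -> (forall z, x <> inv l :: z) -> red e0 (l :: x).
Proof.
move=> Hx Hz; apply: (push e0sym e0irr) => // z /tr0_eq; exact: Hz.
Qed.

Lemma push0_r l x : red e0 x -> (forall z, x <> z ++ [:: inv l]) -> red e0 (x ++ [:: l]).
Proof.
move=> Hx Hz; apply: (push_r e0sym e0irr) => // z /tr0_eq; exact: Hz.
Qed.

Lemma nseqSr (T : Type) (a : T) k : nseq k.+1 a = nseq k a ++ [:: a].
Proof. by elim: k => [|k IH] //=; rewrite -IH. Qed.

Lemma comm_letter v b N : comm e0 (nseq N (v, false)) [:: (v, b)].
Proof.
have H : comm e0 (nseq N (v, false)) [:: (v, false)].
  by apply: comm_sym; rewrite /comm -nseqSr; exact: raag_refl.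
case: b => //.
exact: (comm_winv H).
Qed.

Lemma fg_contra v N f l0 lz : 0 < N -> red e0 f -> comm e0 (nseq N (v, false)) f ->
  (exists f', f = l0 :: f') -> (exists f'', f = f'' ++ [:: lz]) ->
  l0.1 != v -> lz.1 != v -> False.
Proof.
move=> HN Hf Hc [f' Ef'] [f'' Ef''] H0 Hz.
have HA : forall k, red e0 (nseq k (v, false) ++ f).
  elim=> [|k IH] //=; apply: push0 => // z.
  case: k {IH} => [|k] /=; last by case.
  by rewrite Ef' => -[E _]; move: H0; rewrite E eqxx.
have HB : forall k, red e0 (f ++ nseq k (v, false)).
  elim=> [|k IH]; first by rewrite cats0.
  rewrite nseqSr catA; apply: push0_r => // z.
  case: k {IH} => [|k].
    rewrite cats0 Ef'' => /eqP; rewrite !cats1 eqseq_rcons => /andP [_ /eqP E].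
    by move: Hz; rewrite E eqxx.
  by rewrite nseqSr catA => /eqP; rewrite !cats1 eqseq_rcons => /andP [_ /eqP].
have := red_uniq e0sym e0irr (HA N) (HB N) Hc => /tr0_eq.
case: N HN {HA HB Hc} => [|N] // _.
rewrite Ef' /= => -[E _]; move: H0; rewrite -E eqxx.
done.
Qed.

Lemma fg_lemma v N n f : 0 < N -> size f <= n -> red e0 f ->
  comm e0 (nseq N (v, false)) f -> all (fun l => l.1 == v) f.
Proof.
move=> HN; elim: n f => [|n IH] f Hsz Hf Hc.
  by move: Hsz; rewrite leqn0 => /nilP ->.
case: f Hsz Hf Hc => [|l0 f'] // Hsz Hf Hc.
case: (boolP (l0.1 == v)) => H0.
  rewrite /= H0 /=; apply: IH => //.
    by apply: (@red_catr _ _ [:: l0]).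
  have E : req0 f' ([:: inv l0] ++ l0 :: f').
    by apply: raag_sym; have := @raag_cancel V e0 [::] f' (inv l0); rewrite inv_letterK.
  apply: comm_reqr (raag_sym E) _; apply: comm_cat => //.
  by case: l0 H0 {Hsz Hf Hc E} => w b /= /eqP ->; exact: comm_letter.
case: (lastP f') Hsz Hf Hc => [|f1 lz] Hsz Hf Hc.
  exfalso; apply: (fg_contra HN Hf Hc (l0:=l0) (lz:=l0)) => //.
    by exists [::].
  by exists [::].
case: (boolP (lz.1 == v)) => Hzv; last first.
  exfalso; apply: (fg_contra HN Hf Hc (l0:=l0) (lz:=lz)) => //.
    by exists (rcons f1 lz).
  by exists (l0 :: f1); rewrite /= cats1.
move: Hsz Hf Hc; rewrite -rcons_cons -cats1 => Hsz Hf Hc.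
rewrite all_cat [all _ [:: lz]]/= Hzv; apply/andP; split => //; apply: IH.
- by move: Hsz; rewrite size_cat addn1.
- exact: (@red_catl _ _ [:: lz]).
- have E : req0 (l0 :: f1) (((l0 :: f1) ++ [:: lz]) ++ [:: inv lz]).
    by apply: raag_sym; rewrite -catA; have := @raag_cancel V e0 (l0 :: f1) [::] lz; rewrite cats0.
  apply: comm_reqr (raag_sym E) _; apply: comm_cat => //.
  by case: lz Hzv {Hsz Hf Hc E} => w b /= /eqP ->; exact: comm_letter.
Qed.

End FG.


Section Tree.
Variables (V : finType) (e : rel V) (r : V).
Hypothesis esym : symmetric e.
Hypothesis eirr : irreflexive e.
Hypothesis conn : forall x y, connect e x y.

Fixpoint ball k : {set V} :=
  if k is k'.+1 then ball k' :|: [set y | [exists x in ball k', e x y]] else [set r].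

Lemma ball_mono k k' : k <= k' -> ball k \subset ball k'.
Proof.
move=> /subnK <-; elim: (k' - k) => [|j IH] //=.
exact: subset_trans IH (subsetUl _ _).
Qed.

Lemma ball_path p x k : path e x p -> x \in ball k -> last x p \in ball (k + size p).
Proof.
elim: p x k => [|y p IH] x k /=; first by rewrite addn0.
case/andP => Hxy Hp Hx; rewrite addnS -addSn; apply: IH => //=.
by rewrite in_setU; apply/orP; right; rewrite inE; apply/existsP; exists x; rewrite Hx.
Qed.

Lemma reach v : exists k, v \in ball k.
Proof.
have /connectP [p Hp ->] := conn r v.
by exists (0 + size p); apply: ball_path => //=; rewrite inE.
Qed.

Definition d v := ex_minn (reach v).

Lemma dP v : v \in ball (d v).
Proof. by rewrite /d; case: ex_minnP. Qed.

Lemma d_min v k : v \in ball k -> d v <= k.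
Proof. by rewrite /d; case: ex_minnP => m _ H /H. Qed.

Definition par v := odflt r [pick x | (x \in ball (d v).-1) && e x v].

Lemma par_spec v : v != r -> [/\ e (par v) v, par v \in ball (d v).-1 & d (par v) < d v].
Proof.
move=> Hv; have Hd := dP v.
case Edv: (d v) Hd => [|k] Hd.
  by move: Hd => /=; rewrite inE => /eqP E; rewrite E eqxx in Hv.
have Hnk : v \notin ball k.
  apply/negP => /d_min; rewrite Edv ltnn //.
move: Hd; rewrite /= in_setU (negbTE Hnk) /= inE => /existsP [x /andP [Hx Hxv]].
rewrite /par Edv /=; case: pickP => [y /andP [Hy Hyv]|H]; last first.
  by move: (H x); rewrite Hx Hxv.
by split => //; apply: leq_ltn_trans (d_min Hy) _.
Qed.

Lemma par_nbr a : e r a -> par a = r.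
Proof.
move=> Ha; have Har : a != r by apply/eqP => E; move: Ha; rewrite E eirr.
have [_ H _] := par_spec Har.
have Hd : d a <= 1.
  by apply: d_min => /=; rewrite !inE; apply/orP; right; apply/existsP; exists r; rewrite !inE eqxx.
move: H; case: (d a) Hd => [|[|]] //= _; by rewrite inE => /eqP.
Qed.

Lemma no_triangle a b : #|[set p : V * V | e p.1 p.2]| = (#|V| - 1).*2 ->
  e r a -> e r b -> a != b -> ~~ e a b.
Proof.
move=> Hcard Ha Hb Hab; apply/negP => Heab.
set D := [set~ r].
set S1 := [set (v, par v) | v in D].
set S2 := [set (par v, v) | v in D].
have HD : #|D| = #|V|.-1 by rewrite cardsC1.
have inj1 : {in D &, injective (fun v => (v, par v))} by move=> x y _ _ [].
have inj2 : {in D &, injective (fun v => (par v, v))} by move=> x y _ _ [].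
have C1 : #|S1| = #|V|.-1 by rewrite card_in_imset.
have C2 : #|S2| = #|V|.-1 by rewrite card_in_imset.
have Hdisj : S1 :&: S2 = set0.
  apply/eqP; rewrite -subset0; apply/subsetP => p; rewrite inE => /andP [].
  move=> /imsetP [v Hv ->] /imsetP [w Hw [E1 E2]].
  rewrite in_setC1 in Hv; rewrite in_setC1 in Hw.
  have [_ _ L1] := par_spec Hv; have [_ _ L2] := par_spec Hw.
  by move: L1 L2; rewrite -E1 E2 => L1 L2; have := ltn_trans L1 L2; rewrite ltnn.
have Hr_a : a != r by apply/eqP => E; move: Ha; rewrite E eirr.
have Hr_b : b != r by apply/eqP => E; move: Hb; rewrite E eirr.
have Hnot : (a, b) \notin S1 :|: S2.
  rewrite in_setU; apply/norP; split; apply/negP => /imsetP [v Hv [E1 E2]].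
    by move: Hr_b; rewrite E2 -E1 par_nbr // eqxx.
  by move: Hr_a; rewrite E1 -E2 par_nbr // eqxx.
have Hsub : (a, b) |: (S1 :|: S2) \subset [set p : V * V | e p.1 p.2].
  apply/subsetP => p; rewrite !inE => /orP [/eqP -> //|/orP [] /imsetP [v Hv ->]] /=;
  rewrite in_setC1 in Hv; have [H _ _] := par_spec Hv => //.
  by rewrite esym.
have := subset_leq_card Hsub; rewrite cardsU1 Hnot cardsU Hdisj cards0 subn0 C1 C2 Hcard.
by rewrite subn1 -addnn add1n ltnn.
Qed.

End Tree.


Section Main.
Variables (V : finType) (e : rel V).
Hypothesis esym : symmetric e.
Hypothesis eirr : irreflexive e.
Local Notation req := (raag_eq e).
Local Notation inv := (@inv_letter V).

Lemma req_cancel_l' y z : req (y ++ winv y ++ z) z.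
Proof. by rewrite catA; apply: (req_catr z (req_invr e y)). Qed.

Lemma power_in_K (K : word V -> Prop) : is_subgroup e K -> finite_index e K ->
  forall y, exists2 n, 0 < n & K (flatten (nseq n y)).
Proof.
move=> [Kreq K1 Kmul Kinv] [reps Hreps] y.
have Hch : forall k, exists g, g \in reps /\ K (winv g ++ flatten (nseq k y)).
  by move=> k; case: (Hreps (flatten (nseq k y))) => g H1 H2; exists g.
pose F k := proj1_sig (constructive_indefinite_description _ (Hch k)).
have HF k : F k \in reps /\ K (winv (F k) ++ flatten (nseq k y)).
  exact: (proj2_sig (constructive_indefinite_description _ (Hch k))).
set s := map F (iota 0 (size reps).+1).
have Hs : size s = (size reps).+1 by rewrite size_map size_iota.
have : ~~ uniq s.
  apply/negP => Hu; have := uniq_leq_size Hu.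
  have Hsub : {subset s <= reps} by move=> z /mapP [k _ ->]; case: (HF k).
  by move/(_ reps Hsub); rewrite Hs ltnn.
case/(uniqPn [::]) => i [j [Hij Hj]].
have Hi : i < size s by apply: ltn_trans Hij Hj.
rewrite Hs in Hi Hj.
rewrite !(nth_map 0) ?size_iota // !nth_iota // !add0n => Eij.
case: (HF i) => _ Ki; case: (HF j) => _ Kj; rewrite -Eij in Kj.
exists (j - i); first by rewrite subn_gt0.
have := Kmul _ _ (Kinv _ Ki) Kj; apply: Kreq.
rewrite winv_cat winvK -catA.
have Ej : flatten (nseq j y) = flatten (nseq i y) ++ flatten (nseq (j - i) y).
  by rewrite -flatten_cat -nseqD subnKC // ltnW.
rewrite Ej; apply: raag_trans (req_catl _ (req_cancel_l' _ _)) _.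
exact: req_cancel_l.
Qed.

Lemma split_star u y : all (fun l => (l.1 == u) || e u l.1) y ->
  exists pu f, [/\ req y (pu ++ f), all (fun l => l.1 == u) pu & all (fun l => e u l.1) f].
Proof.
elim: y => [|l y IH] /=.
  by move=> _; exists [::], [::]; split => //; exact: raag_refl.
case/andP => Hl /IH [pu [f [Hy Hpu Hf]]].
case/orP: Hl => Hl.
  exists (l :: pu), f; split => /=; last by [].
    exact: (req_catl [:: l] Hy).
  by rewrite Hl.
exists pu, (l :: f); split => //=; last by rewrite Hl.
apply: raag_trans (req_catl [:: l] Hy) _.
apply: raag_sym; apply: req_move => //.
apply/allP => m mpu; move/allP: Hpu => /(_ m mpu) /eqP ->.
by rewrite esym.
Qed.

Lemma wpow_cons w0 m : exists m', req (w0 ++ wpow w0 m) (wpow w0 m').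
Proof.
case: m => n.
  by exists (Posz n.+1); exact: raag_refl.
case: n => [|n].
  exists (Posz 0); rewrite /wpow /= cats0; exact: req_invr.
exists (Negz n); rewrite [wpow _ (Negz n.+1)]/wpow [nseq _ _]/= [flatten _]/=.
exact: req_cancel_l'.
Qed.

Lemma wpow_cons_inv w0 m : exists m', req (winv w0 ++ wpow w0 m) (wpow w0 m').
Proof.
case: m => n; last by exists (Negz n.+1); exact: raag_refl.
case: n => [|n].
  by exists (Negz 0); exact: raag_refl.
exists (Posz n); rewrite [wpow _ (Posz n.+1)]/wpow [nseq _ _]/= [flatten _]/=.
exact: req_cancel_l.
Qed.

Lemma upow u pu : all (fun l => l.1 == u) pu -> exists m, req pu (wpow [:: (u, false)] m).
Proof.
elim: pu => [|l pu IH] /=; first by move=> _; exists (Posz 0); exact: raag_refl.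
case/andP => /eqP Hl /IH [m Hm].
case: l Hl => v b /= ->.
case: b.
  have [m' Hm'] := wpow_cons_inv [:: (u, false)] m.
  exists m'; apply: raag_trans Hm'.
  exact: (req_catl [:: (u, true)] Hm).
have [m' Hm'] := wpow_cons [:: (u, false)] m.
exists m'; apply: raag_trans Hm'.
exact: (req_catl [:: (u, false)] Hm).
Qed.

Lemma comm_letters a b : all (fun l => all (fun m => e l.1 m.1) b) a -> comm e a b.
Proof.
move=> H; apply: comm_sym; elim: a H => [|l a IH] /=; first by move=> _; exact: comm_nil.
case/andP => Hl Ha; rewrite -cat1s; apply: comm_cat; last exact: IH.
rewrite /comm; have := @req_move V e esym l b [::] Hl; rewrite cats0 => H.
exact: H.
Qed.

Lemma flatten_nseq1 (l : V * bool) n : flatten (nseq n [:: l]) = nseq n l.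
Proof. by elim: n => [|n IH] //=; rewrite IH. Qed.

End Main.


Lemma image_part (V : finType) (e : rel V) (K : word V -> Prop) (w : word V) :
  is_subgroup e K -> finite_index e K -> image_finite_index e K w.
Proof.
move=> [Kreq K1 Kmul Kinv] [reps Hreps].
have build : forall rs : seq (word V), exists rs' : seq (word V),
    (forall c, c \in rs' -> centG e w c) /\
    forall g, g \in rs -> (exists c, centG e w c /\ K (winv g ++ c)) ->
      exists2 c, c \in rs' & (centG e w c /\ K (winv g ++ c)).
  elim=> [|g rs [rs' [H1 H2]]]; first by exists [::].
  case: (classic (exists c, centG e w c /\ K (winv g ++ c))) => [[c [Hc Kc]]|N].
    exists (c :: rs'); split.
      by move=> c'; rewrite inE => /orP [/eqP ->|/H1].
    move=> g'; rewrite inE => /orP [/eqP -> _|Hg' Hex].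
      by exists c; rewrite ?inE ?eqxx.
    by case: (H2 g' Hg' Hex) => c' Hc' Hc''; exists c' => //; rewrite inE Hc' orbT.
  exists rs'; split => // g'; rewrite inE => /orP [/eqP -> Hex|]; last exact: H2.
  by case: N.
have [rs' [H1 H2]] := build reps.
exists rs'; split => // x Hx.
case: (Hreps x) => g Hg Kg.
case: (H2 g Hg) => [|c Hc [Hcw Kc]]; first by exists x.
exists c => //; exists (winv c ++ x), (Posz 0); split.
  split.
    apply: Kreq (Kmul _ _ (Kinv _ Kc) Kg).
    rewrite winv_cat winvK -catA; apply: req_catl; exact: req_cancel_l'.
  apply: comm_sym; apply: comm_cat.
    by apply: comm_winv; apply: comm_sym.
  exact: comm_sym.
rewrite /wpow /= cats0; apply: raag_sym; exact: req_cancel_l'.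
Qed.


Lemma core (V : finType) (e : rel V) (esym : symmetric e) (eirr : irreflexive e)
  (u : V) (Hnt : forall a b, e u a -> e u b -> ~~ e a b)
  (g x : word V) (a1 a2 : V) (n1 n2 : nat) :
  e u a1 -> e u a2 -> a1 != a2 -> 0 < n1 -> 0 < n2 ->
  comm e x (g ++ [:: (u, false)] ++ winv g) ->
  comm e x (g ++ nseq n1 (a1, false) ++ winv g) ->
  comm e x (g ++ nseq n2 (a2, false) ++ winv g) ->
  exists m, raag_eq e x (g ++ wpow [:: (u, false)] m ++ winv g).
Proof.
move=> Ha1 Ha2 Ha12 Hn1 Hn2 Hu H1 H2.
set x' := winv g ++ x ++ g.
have Hu' : comm e x' [:: (u, false)] by apply: comm_unconj.
have H1' : comm e x' (nseq n1 (a1, false)) by apply: comm_unconj.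
have H2' : comm e x' (nseq n2 (a2, false)) by apply: comm_unconj.
set x0 := nf e x'.
have Hx0 : raag_eq e x' x0 := nf_req esym eirr x'.
have Hr0 : red e x0 by apply: nf_red.
have Hc0 : comm e [:: (u, false)] x0 by apply: comm_sym; apply: comm_reql Hx0 Hu'.
have [y [Hy Hst]] := cent_gen esym eirr (leqnn (size x0)) Hr0 Hc0.
have [pu [f [Hpf Hpu Hf]]] := split_star esym Hst.
have [m Hm] := upow e Hpu.
have Hxpf : raag_eq e x' (pu ++ f) := raag_trans Hx0 (raag_trans Hy Hpf).
have Hfi : forall a n, e u a -> 0 < n -> comm e x' (nseq n (a, false)) ->
    all (fun l => l.1 == a) (nf (@e0 V) f).
  move=> a n Ha Hn Hc.
  have Hc1 : comm e (pu ++ f) (nseq n (a, false)) by apply: comm_reql Hxpf Hc.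
  have Hc2 : comm e pu (nseq n (a, false)).
    apply: (comm_letters esym).
    apply/allP => l lpu; apply/allP => k; rewrite mem_nseq => /andP [_ /eqP ->] /=.
    by move/allP: Hpu => /(_ l lpu) /eqP ->.
  have Hc3 : comm e f (nseq n (a, false)).
    apply: (@req_cancl _ _ pu); rewrite !catA.
    apply: raag_trans Hc1 _; rewrite -catA.
    by rewrite !catA; exact: req_catr _ (comm_sym Hc2).
  have Hall : all (fun l => e u l.1) (nseq n (a, false)).
    by apply/allP => k; rewrite mem_nseq => /andP [_ /eqP ->].
  have := req_filter (P := fun v => e u v) Hnt Hc3.
  rewrite !filter_cat (all_filterP Hf) (all_filterP Hall) => Hc4.
  have Hc5 : comm (@e0 V) (nseq n (a, false)) (nf (@e0 V) f).
    apply: comm_reqr (nf_req (@e0sym V) (@e0irr V) f) _.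
    exact: comm_sym.
  apply: (fg_lemma Hn (leqnn _) _ Hc5).
  exact: nf_red (@e0sym V) (@e0irr V) _.
have F1 := Hfi a1 n1 Ha1 Hn1 H1'.
have F2 := Hfi a2 n2 Ha2 Hn2 H2'.
have Hf0 : nf (@e0 V) f = [::].
  move: F1 F2; case: (nf _ f) => [|l f0] //= /andP [/eqP E1 _] /andP [/eqP E2 _].
  by move: Ha12; rewrite -E1 -E2 eqxx.
have Hf' : raag_eq e f [::].
  apply: (req_from0 e); have := nf_req (@e0sym V) (@e0irr V) f; rewrite Hf0.
  done.
exists m.
have Hx'm : raag_eq e x' (wpow [:: (u, false)] m).
  apply: raag_trans Hxpf _; apply: raag_trans (req_catl pu Hf') _.
  by rewrite cats0.
have := conj_inv e (winv g) x; rewrite winvK => Hci.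
apply: raag_trans (raag_sym Hci) _.
exact: req_conj Hx'm.
Qed.

Theorem mainTheorem12 (V : finType) (e : rel V) (K : word V -> Prop) (w : word V) :
  finite_tree e ->
  is_subgroup e K -> finite_index e K ->
  reduced_ext_vertex e w ->
  (forall x, ker_pi_CK e K w x <-> center_centK e K w x) /\
  image_finite_index e K w.
Proof.
move=> [[esym eirr] Hn conn Hcard] HK Hfi [u [g [Hdeg Hw]]].
split; last exact: image_part.
move=> x; split.
  case=> [[Kx Hx] [m Hm]]; split => // y [Ky Hy].
  have H1 : comm e y (wpow w m) by apply: comm_wpow.
  apply: comm_sym; apply: comm_reqr (raag_sym Hm) H1.
case=> [[Kx Hx] Hc]; split => //.
have [a1 [a2 [Ha1 Ha2 Ha12]]] : exists a1 a2, [/\ a1 \in [set v | e u v], a2 \in [set v | e u v] & a1 != a2].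
  by apply/card_gt1P.
rewrite !inE in Ha1 Ha2.
have Hnt : forall a b, e u a -> e u b -> ~~ e a b.
  move=> a b Ha Hb; case: (eqVneq a b) => [->|Hab]; first by rewrite eirr.
  exact: (no_triangle esym eirr conn Hcard Ha Hb Hab).
have Hpow : forall a, e u a -> exists2 n, 0 < n & comm e x (g ++ nseq n (a, false) ++ winv g).
  move=> a Ha.
  set Y := g ++ [:: (a, false)] ++ winv g.
  have HwY : comm e w Y.
    apply: comm_reql (raag_sym Hw) _.
    rewrite -[(u, false) :: winv g]cat1s /Y; apply: comm_conj; rewrite /comm /=.
    exact: (@raag_comm V e [::] [::] _ _ false false Ha).
  have [n Hn0 KY] := power_in_K HK Hfi Y.
  exists n => //.
  have HcY : comm e x (flatten (nseq n Y)).
    apply: Hc; split => //; apply: comm_sym; exact: comm_flatten.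
  have := conj_pow e g [:: (a, false)] n; rewrite flatten_nseq1 => Hcp.
  exact: comm_reqr Hcp HcY.
have [n1 Hn1 H1] := Hpow a1 Ha1.
have [n2 Hn2 H2] := Hpow a2 Ha2.
have Hxw : comm e x (g ++ [:: (u, false)] ++ winv g) by apply: comm_reqr Hw Hx.
have [m Hm] := core esym eirr Hnt Ha1 Ha2 Ha12 Hn1 Hn2 Hxw H1 H2.
exists m; apply: raag_trans Hm _.
apply: raag_trans (raag_sym (wpow_conj e g _ m)) _.
apply: wpow_req; exact: raag_sym Hw.
Qed.
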